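(* Consider the discrete second-price auction. In the model with ties, the unique equilibrium is the profile in which every player uses $\beta(v)=v$ for all $v\in X$. In the model without ties, the set of equilibria is precisely the set of strategy profiles in which every player $i$ uses a bidding function with $\beta_i(v)\in\{v,\,v+\delta\}\cap X$ for every $v\in X$ (i.e. each player bids either their valuation or their valuation plus $\delta$).
   Context: Model. There are $n\ge 2$ risk-neutral bidders competing for one indivisible object. Fix $\delta>0$ and $x\in\mathbb N$ and let $X=\{0,\delta,2\delta,\dots,x\delta\}$. Each bidder $i$ privately learns a value $v_i\in X$; values are drawn independently across bidders and every element of $X$ has strictly positive probability. Each bidder submits a bid $b_i\in X$. A (pure) strategy of bidder $i$ is a bidding function $\beta_i:X\to X$. Tie rules: in the model without ties, bidder $i$ wins iff $b_i>b_j$ for all $j\neq i$ (if the highest bid is tied, nobody wins); in the model with ties, if $m$ bidders submit the highest bid, each of them wins with probability $1/m$. In the second-price auction the winner receives the object and pays the highest bid among the other bidders; payoff is value minus payment if winning and $0$ otherwise. An equilibrium is a profile of bidding functions such that each bidder's bidding function maximises their expected payoff given the others' bidding functions (a pure-strategy Bayes–Nash equilibrium) and such that no bidder uses a weakly dominated bidding function (a bidding function is weakly dominated if some other bidding function yields at least as high expected payoff against every profile of opponents' bidding functions, and strictly higher against some). *)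

(* Defs.v *)
From mathcomp Require Import all_boot all_order all_algebra.
Set Implicit Arguments. Unset Strict Implicit. Unset Printing Implicit Defensive.
Import Order.TTheory GRing.Theory Num.Theory.
Local Open Scope ring_scope.

(* The grid X = {0, delta, ..., x*delta} is represented by indices 'I_x.+1:
   index k stands for the value/bid k*delta.  Bidders are 'I_n. *)

Definition strategy (x : nat) := {ffun 'I_x.+1 -> 'I_x.+1}.

Definition highest_other (n x : nat) (i : 'I_n) (b : 'I_n -> 'I_x.+1) : nat :=
  (\max_(j | j != i) (b j : nat))%N.

(* Probability that bidder i wins, given the bid profile b.
   ties = true : among the m highest bidders each wins with prob. 1/m.
   ties = false: i wins iff its bid is strictly above all others. *)
Definition win_prob (R : realFieldType) (ties : bool) (n x : nat)
    (i : 'I_n) (b : 'I_n -> 'I_x.+1) : R :=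
  let m := (\max_j (b j : nat))%N in
  if ties then
    (if (b i : nat) == m then (#|[set j | (b j : nat) == m]|%:R)^-1 else 0)
  else
    (if [forall j, (j != i) ==> ((b j : nat) < b i)%N] then 1 else 0).

(* Ex-post (expected over tie-breaking) payoff of bidder i with value index v
   in the second-price auction: the winner pays the highest other bid. *)
Definition payoff (R : realFieldType) (ties : bool) (n x : nat) (delta : R)
    (i : 'I_n) (v : 'I_x.+1) (b : 'I_n -> 'I_x.+1) : R :=
  win_prob R ties i b * (delta * ((v : nat)%:R - (highest_other i b)%:R)).

(* Interim-ex-ante expected payoff of bidder i using bidding function bi,
   when the others use the bidding functions in beta (beta i is ignored);
   values are drawn independently, p j k = Prob(v_j = k*delta). *)
Definition exp_payoff (R : realFieldType) (ties : bool) (n x : nat) (delta : R)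
    (p : 'I_n -> 'I_x.+1 -> R) (i : 'I_n) (bi : strategy x)
    (beta : 'I_n -> strategy x) : R :=
  \sum_(v : {ffun 'I_n -> 'I_x.+1})
     (\prod_j p j (v j)) *
     payoff ties delta i (v i)
       (fun j => if j == i then bi (v i) else beta j (v j)).

Definition weakly_dominated (R : realFieldType) (ties : bool) (n x : nat)
    (delta : R) (p : 'I_n -> 'I_x.+1 -> R) (i : 'I_n) (bi : strategy x) : Prop :=
  exists bi' : strategy x,
    (forall beta : 'I_n -> strategy x,
        exp_payoff ties delta p i bi beta <= exp_payoff ties delta p i bi' beta)
    /\ (exists beta : 'I_n -> strategy x,
        exp_payoff ties delta p i bi beta < exp_payoff ties delta p i bi' beta).

Definition equilibrium (R : realFieldType) (ties : bool) (n x : nat)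
    (delta : R) (p : 'I_n -> 'I_x.+1 -> R) (beta : 'I_n -> strategy x) : Prop :=
  forall i : 'I_n,
    (forall bi : strategy x,
        exp_payoff ties delta p i bi beta <= exp_payoff ties delta p i (beta i) beta)
    /\ ~ weakly_dominated ties delta p i (beta i).

(* Main.v *)
Require Import Defs.
From mathcomp Require Import all_boot all_order all_algebra.
From mathcomp Require Import lra zify.
From Stdlib Require Import FunctionalExtensionality.
Import Order.TTheory GRing.Theory Num.Theory.
Local Open Scope ring_scope.

Section S.
Variables (R : realFieldType) (n x : nat) (delta : R).
Hypothesis n2 : (2 <= n)%N.
Hypothesis dpos : 0 < delta.

Definition prof (i : 'I_n) (c : 'I_x.+1) (o : 'I_n -> 'I_x.+1) : 'I_n -> 'I_x.+1 :=
  fun j => if j == i then c else o j.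

Definition hh (i : 'I_n) (o : 'I_n -> 'I_x.+1) : nat := (\max_(j | j != i) (o j : nat))%N.

Lemma other_ex (i : 'I_n) : exists j : 'I_n, j != i.
Proof.
have h0 : (0 < n)%N by lia.
have h1 : (1 < n)%N by lia.
case: (eqVneq (val i) 0%N) => Hi.
  exists (Ordinal h1); apply/eqP => E; move: Hi; rewrite -E /=; done.
exists (Ordinal h0); apply/eqP => E; by move: Hi; rewrite -E.
Qed.

Lemma ho_prof i c o : highest_other i (prof i c o) = hh i o.
Proof.
rewrite /highest_other /hh; apply: eq_bigr => j /negbTE; by rewrite /prof => ->.
Qed.

Lemma max_prof i c o : (\max_j (prof i c o j : nat))%N = maxn c (hh i o).
Proof.
rewrite (bigD1 i) //= {1}/prof eqxx; congr maxn.
by rewrite -(ho_prof i c o).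
Qed.

Lemma hh_lt i (o : 'I_n -> 'I_x.+1) (c : nat) : [forall j, (j != i) ==> ((o j : nat) < c)%N] = (hh i o < c)%N.
Proof.
apply/idP/idP.
  move/forallP => H; case: c H => [|c] H.
    have [j Hj] := other_ex i; by move: (H j); rewrite Hj.
  rewrite ltnS; apply/bigmax_leqP => j Hj; by move: (H j); rewrite Hj.
move=> Hh; apply/forallP => j; apply/implyP => Hj.
have := @leq_bigmax_cond _ (fun k => k != i) (fun k => (o k : nat)) j Hj; rewrite /hh in Hh; lia.
Qed.

Definition Pay ties i (v : 'I_x.+1) c o := payoff ties delta i v (prof i c o).

Lemma Pay_nt i v c o : Pay false i v c o =
  if (hh i o < c)%N then delta * ((v : nat)%:R - (hh i o)%:R) else 0.
Proof.
rewrite /Pay /payoff /win_prob ho_prof.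
have -> : [forall j, (j != i) ==> (prof i c o j < prof i c o i)%N] =
          [forall j, (j != i) ==> (o j < c)%N].
  apply: eq_forallb => j; rewrite /prof eqxx; by case: (j == i).
rewrite hh_lt; case: ifP => _; by rewrite ?mul1r ?mul0r.
Qed.

Definition wcnt i c o := #|[set j | (prof i c o j : nat) == maxn c (hh i o)]|.

Lemma Pay_t i v c o : Pay true i v c o =
  if (hh i o <= c)%N then ((wcnt i c o)%:R)^-1 * (delta * ((v : nat)%:R - (hh i o)%:R)) else 0.
Proof.
rewrite /Pay /payoff /win_prob ho_prof max_prof /wcnt {1}/prof eqxx.
have -> : ((c : nat) == maxn c (hh i o)) = (hh i o <= c)%N.
  by rewrite eq_sym; apply/eqP/idP => [<-|/maxn_idPl //]; rewrite leq_maxr.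
case: ifP => _; by rewrite ?mul0r.
Qed.

Lemma wcnt_pos i (c : 'I_x.+1) o : (hh i o <= c)%N -> (0 < wcnt i c o)%N.
Proof.
move=> H; apply/card_gt0P; exists i; rewrite inE /prof eqxx.
by apply/eqP; apply/esym/maxn_idPl.
Qed.

Lemma wcnt1 i (c : 'I_x.+1) o : (hh i o < c)%N -> wcnt i c o = 1%N.
Proof.
move=> H; rewrite /wcnt -(cards1 i); apply: eq_card => j.
rewrite !inE /prof; have -> : maxn c (hh i o) = c by apply/maxn_idPl; lia.
case: ifPn => Hj; first by rewrite eqxx.
apply/negbTE; have := @leq_bigmax_cond _ (fun k => k != i) (fun k => (o k : nat)) j Hj.
rewrite /hh in H; lia.
Qed.

Definition T i (v : 'I_x.+1) o : R :=
  if (hh i o < v)%N then delta * ((v : nat)%:R - (hh i o)%:R) else 0.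

Lemma Pay_truth ties i v o : Pay ties i v v o = T i v o.
Proof.
rewrite /T; case: ties; last by rewrite Pay_nt.
rewrite Pay_t; case: (ltngtP (hh i o) v) => H.
- rewrite ?ltnW // wcnt1 // invr1 mul1r //.
- by rewrite ?leqNgt ?H.
- by rewrite ?H ?leqnn subrr !mulr0.
Qed.

Lemma inv_bounds (w : nat) : (0 < w)%N -> 0 < (w%:R : R)^-1 /\ (w%:R : R)^-1 <= 1.
Proof.
move=> Hw; have H1 : (1 : R) <= w%:R by rewrite ler1n.
split; first by rewrite invr_gt0; lra.
by rewrite invf_le1 //; lra.
Qed.

Lemma Pay_le ties i v (c : 'I_x.+1) o : Pay ties i v c o <= T i v o.
Proof.
have Ha : (hh i o < v)%N -> 0 < delta * ((v : nat)%:R - (hh i o)%:R).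
  by move=> H; apply: mulr_gt0 => //; rewrite subr_gt0 ltr_nat.
have Hb : ~~ (hh i o < v)%N -> delta * ((v : nat)%:R - (hh i o)%:R) <= 0.
  rewrite -leqNgt => H; apply: mulr_ge0_le0; first exact: ltW.
  by rewrite subr_le0 ler_nat.
rewrite /T; move: Ha Hb; set D := delta * _ => Ha Hb.
case: ties.
  rewrite Pay_t -/D; case: ifP => Hc.
    have [k0 k1] := inv_bounds _ (wcnt_pos i c o Hc).
    case: ifP => Hv; first by have ? := Ha Hv; nra.
    have ? := Hb (negbT Hv); nra.
  case: ifP => Hv //; have ? := Ha Hv; lra.
rewrite Pay_nt -/D; case: ifP => Hc; case: ifP => Hv //.
- have ? := Hb (negbT Hv); lra.
- have ? := Ha Hv; lra.
Qed.

Definition opt (ties : bool) (c v : 'I_x.+1) : bool :=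
  if ties then c == v else ((c : nat) == v) || ((c : nat) == (v : nat).+1).

Lemma Pay_opt ties i v (c : 'I_x.+1) o : opt ties c v -> Pay ties i v c o = T i v o.
Proof.
case: ties => /=; first by move/eqP ->; rewrite Pay_truth.
rewrite Pay_nt /T; case/orP => /eqP Hc; rewrite Hc //.
case: (ltngtP (hh i o) v) => H.
- by rewrite ltnW.
- by rewrite ltnNge H.
- by rewrite H leqnn subrr mulr0.
Qed.

Lemma hh_const i (k : 'I_x.+1) : hh i (fun _ => k) = k.
Proof.
have [j Hj] := other_ex i.
apply/eqP; rewrite eqn_leq; apply/andP; split.
  by apply/bigmax_leqP.
exact: (@leq_bigmax_cond _ (fun k => k != i) (fun _ => (k : nat)) j Hj).
Qed.

Lemma Pay_strict ties i (v c : 'I_x.+1) : ~~ opt ties c v -> exists o, Pay ties i v c o < T i v o.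
Proof.
case: ties => /=.
  move=> Hcv; exists (fun _ => c); rewrite Pay_t /T hh_const leqnn.
  have Hw : wcnt i c (fun _ => c) = n.
    rewrite /wcnt; transitivity #|[set: 'I_n]|; last by rewrite cardsT card_ord.
    apply: eq_card => j.
    rewrite !inE /prof hh_const maxnn; by case: ifP; rewrite eqxx.
  rewrite Hw.
  have Hn : (2 : R) <= n%:R by rewrite ler_nat.
  have Hi : 0 < (n%:R : R)^-1 /\ (n%:R : R)^-1 <= 2^-1.
    split; first by rewrite invr_gt0; lra.
    by rewrite lef_pV2 ?posrE //; lra.
  case: Hi => Hi0 Hi1.
  case: ifP => Hv.
    have : 0 < delta * ((v : nat)%:R - (c : nat)%:R) :> R.
      by apply: mulr_gt0 => //; rewrite subr_gt0 ltr_nat.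
    move: (delta * _) => D HD; nra.
  have : (v : nat)%:R - (c : nat)%:R < 0 :> R.
    have Hne : (c : nat) != v by rewrite (inj_eq val_inj).
    rewrite subr_lt0 ltr_nat; move/negbT: Hv; lia.
  move=> Ha; have : delta * ((v : nat)%:R - (c : nat)%:R) < 0 :> R by rewrite pmulr_rlt0.
  move: (delta * _) => D HD; nra.
rewrite negb_or => /andP [H1 H2].
case: (ltnP c v) => Hcv.
  exists (fun _ => c); rewrite Pay_nt /T hh_const ltnn Hcv.
  have : 0 < (v : nat)%:R - (c : nat)%:R :> R by rewrite subr_gt0 ltr_nat.
  (have dp := dpos; nra).
have Hv1 : ((v : nat).+1 < x.+1)%N by have := ltn_ord c; lia.
exists (fun _ => inord (v : nat).+1); rewrite Pay_nt /T hh_const inordK //.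
have -> : ((v : nat).+1 < c)%N by lia.
rewrite ltnNge leqnSn /= mulrSr; (have dp := dpos; nra).
Qed.

Variable p : 'I_n -> 'I_x.+1 -> R.
Hypothesis ppos : forall i k, 0 < p i k.

Definition idS : strategy x := [ffun k => k].

Lemma exp_payoffE ties i (bi : strategy x) (beta : 'I_n -> strategy x) : exp_payoff ties delta p i bi beta =
  \sum_(v : {ffun 'I_n -> 'I_x.+1}) (\prod_j p j (v j)) *
     Pay ties i (v i) (bi (v i)) (fun j => beta j (v j)).
Proof. by []. Qed.

Lemma pi_pos (v : {ffun 'I_n -> 'I_x.+1}) : 0 < \prod_j p j (v j).
Proof. by apply: prodr_gt0 => j _. Qed.

Lemma exp_le ties i (bi : strategy x) (beta : 'I_n -> strategy x) :
  exp_payoff ties delta p i bi beta <= exp_payoff ties delta p i idS beta.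
Proof.
rewrite !exp_payoffE; apply: ler_sum => v _.
apply: ler_wpM2l; first exact: ltW (pi_pos v).
rewrite ffunE Pay_truth; exact: Pay_le.
Qed.

Lemma exp_eq ties i (bi : strategy x) (beta : 'I_n -> strategy x) : (forall k, opt ties (bi k) k) ->
  exp_payoff ties delta p i bi beta = exp_payoff ties delta p i idS beta.
Proof.
move=> H; rewrite !exp_payoffE; apply: eq_bigr => v _.
by rewrite ffunE Pay_truth Pay_opt.
Qed.

Lemma exp_lt ties i (bi : strategy x) k0 : ~~ opt ties (bi k0) k0 -> exists beta,
  exp_payoff ties delta p i bi beta < exp_payoff ties delta p i idS beta.
Proof.
move=> H; have [o Ho] := Pay_strict ties i k0 (bi k0) H.
exists (fun j => [ffun _ => o j]); rewrite !exp_payoffE.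
set v0 : {ffun 'I_n -> 'I_x.+1} := [ffun _ => k0].
rewrite (bigD1 v0) //= [X in _ < X](bigD1 v0) //=.
have Eo : forall v : {ffun 'I_n -> 'I_x.+1}, (fun j => [ffun _ => o j] (v j)) = o.
  by move=> v; apply: functional_extensionality => j; rewrite ffunE.
apply: ltr_leD.
  rewrite Eo ffunE /v0 ffunE Pay_truth; rewrite ltr_pM2l //; exact: pi_pos.
apply: ler_sum => v _; apply: ler_wpM2l; first exact: ltW (pi_pos v).
rewrite ffunE Pay_truth; exact: Pay_le.
Qed.

Lemma idS_opt ties k : opt ties (idS k) k.
Proof. by rewrite /opt ffunE; case: ties; rewrite eqxx. Qed.

Lemma equil_iff ties (beta : 'I_n -> strategy x) :
  equilibrium ties delta p beta <-> (forall i k, opt ties (beta i k) k).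
Proof.
split.
  move=> Heq i k; apply/negPn/negP => Hn.
  have [_ Hnd] := Heq i; apply: Hnd; exists idS; split.
    by move=> b; exact: exp_le.
  exact: exp_lt Hn.
move=> Hopt i; split.
  move=> bi; rewrite (exp_eq ties i (beta i) beta (Hopt i)); exact: exp_le.
case=> bi' [_ [b Hb]]; move: Hb; rewrite (exp_eq ties i (beta i) b (Hopt i)).
by rewrite ltNge exp_le.
Qed.
End S.

Theorem proposition1 (R : realFieldType) (n x : nat) (delta : R)
    (p : 'I_n -> 'I_x.+1 -> R) :
  (2 <= n)%N -> 0 < delta ->
  (forall i k, 0 < p i k) -> (forall i, \sum_k p i k = 1) ->
  (forall beta : 'I_n -> strategy x,
     equilibrium true delta p beta <-> (forall i v, beta i v = v))
  /\
  (forall beta : 'I_n -> strategy x,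
     equilibrium false delta p beta <->
     (forall i v, (beta i v : nat) = v \/ (beta i v : nat) = (v : nat).+1)).
Proof.
move=> n2 dpos ppos _; split => beta; rewrite equil_iff //.
  by split=> H i v; [apply/eqP; exact: H | rewrite /opt H eqxx].
split=> H i v.
  by have := H i v; rewrite /opt => /orP [/eqP -> | /eqP ->]; [left|right].
by rewrite /opt; case: (H i v) => ->; rewrite eqxx ?orbT.
Qed.
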